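(* There is an open set $U\subseteq2^\omega$ with $\Phi(U)=U$ such that its frontier $\mathrm{Fr}\,U=\mathrm{Cl}\,U\setminus\mathrm{Int}\,U$ has positive measure.
   Context: $2^\omega$ is the Cantor space; $N_s=\{x:s\subset x\}$; $\mu$ the coin-tossing measure with $\mu(N_s)=2^{-\mathrm{lh}(s)}$. For measurable $A$, $\Phi(A)=\{x:\lim_n\mu(A\cap N_{x\restriction n})/\mu(N_{x\restriction n})=1\}$. *)

(* Defs.v *)
From Stdlib Require Import Reals List.
Import ListNotations.
Open Scope R_scope.

Definition cantor := nat -> bool.
Definition cset := cantor -> Prop.

Definition restr (x : cantor) (n : nat) : list bool := map x (seq 0 n).

Definition Nbasic (s : list bool) : cset :=
  fun x => forall i : nat, (i < length s)%nat -> x i = nth i s false.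

(* weight of a (possibly absent) basic set: mu(N_s) = 2^{-lh s} *)
Definition wt (o : option (list bool)) : R :=
  match o with Some s => (/ 2) ^ length s | None => 0 end.

Definition covers (A : cset) (c : nat -> option (list bool)) : Prop :=
  forall x, A x -> exists k s, c k = Some s /\ Nbasic s x.

Definition cover_bound (A : cset) (l : R) : Prop :=
  exists c, covers A c /\ forall n, sum_f_R0 (fun k => wt (c k)) n <= l.

Definition neg_cover_bound (A : cset) (y : R) : Prop := cover_bound A (- y).

Lemma neg_cover_bound_bound (A : cset) : bound (neg_cover_bound A).
Proof.
  exists 0. intros y [c [_ H]]. specialize (H 0%nat). simpl in H.
  assert (0 <= wt (c 0%nat)).
  { destruct (c 0%nat); simpl; [apply pow_le; left; apply Rinv_0_lt_compat; apply Rlt_0_2 | apply Rle_refl]. }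
  apply Ropp_le_cancel. rewrite Ropp_0. eapply Rle_trans; eauto.
Qed.

Lemma neg_cover_bound_ne (A : cset) : exists y, neg_cover_bound A y.
Proof.
  exists (-1). exists (fun k => match k with O => Some nil | _ => None end).
  split.
  - intros x _. exists O, nil. split; [reflexivity|]. intros i Hi; simpl in Hi; inversion Hi.
  - intro n. replace (- -1) with 1 by ring. induction n; simpl.
    + right; reflexivity.
    + rewrite Rplus_0_r. exact IHn.
Qed.

(* The coin-tossing outer measure:
   mu*(A) = inf { sum_k 2^{-lh(s_k)} : A subset of U_k N_{s_k} }.
   It agrees with the coin-tossing measure mu on measurable sets. *)
Definition mu (A : cset) : R :=
  - proj1_sig (completeness (neg_cover_bound A)
                 (neg_cover_bound_bound A) (neg_cover_bound_ne A)).

Definition cinter (A B : cset) : cset := fun x => A x /\ B x.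

Definition Phi (A : cset) : cset :=
  fun x => Un_cv (fun n => mu (cinter A (Nbasic (restr x n))) / mu (Nbasic (restr x n))) 1.

Definition is_open (U : cset) : Prop :=
  forall x, U x -> exists n, forall y, Nbasic (restr x n) y -> U y.
Definition Int (A : cset) : cset :=
  fun x => exists n, forall y, Nbasic (restr x n) y -> A y.
Definition Cl (A : cset) : cset :=
  fun x => forall n, exists y, Nbasic (restr x n) y /\ A y.
Definition Fr (A : cset) : cset := fun x => Cl A x /\ ~ Int A x.

(* Main.v *)
Require Import Defs.
From Stdlib Require Import Reals List Lra Lia Classical ClassicalEpsilon.
Import ListNotations.
Open Scope R_scope.

Definition pre (s t : list bool) : Prop :=
  (length s <= length t)%nat /\ forall i, (i < length s)%nat -> nth i s false = nth i t false.

Lemma pre_N s t y : pre s t -> Nbasic t y -> Nbasic s y.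
Proof. intros [Hl Hp] H i Hi. rewrite Hp by lia. apply H. lia. Qed.

Lemma NN_pre s t y : Nbasic s y -> Nbasic t y -> (length s <= length t)%nat -> pre s t.
Proof. intros Hs Ht Hl. split; auto. intros i Hi. rewrite <- Hs, <- Ht by lia. auto. Qed.

Lemma pre_trans a b c : pre a b -> pre b c -> pre a c.
Proof. intros [H1 H2] [H3 H4]. split; [lia|]. intros i Hi. rewrite H2, H4 by lia. auto. Qed.

Definition pt (s : list bool) : cantor := fun i => nth i s false.
Lemma N_pt s : Nbasic s (pt s).
Proof. intros i Hi. reflexivity. Qed.

Lemma N_app s b y : Nbasic (s ++ [b]) y -> Nbasic s y /\ y (length s) = b.
Proof.
  intro H. split.
  - intros i Hi. rewrite H by (rewrite length_app; simpl; lia). rewrite app_nth1; auto.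
  - rewrite H by (rewrite length_app; simpl; lia). rewrite app_nth2 by lia.
    rewrite Nat.sub_diag. reflexivity.
Qed.

Lemma app_N s b y : Nbasic s y -> y (length s) = b -> Nbasic (s ++ [b]) y.
Proof.
  intros H Hb i Hi. rewrite length_app in Hi; simpl in Hi.
  destruct (Nat.lt_ge_cases i (length s)).
  - rewrite app_nth1; auto.
  - assert (i = length s) by lia. subst. rewrite app_nth2 by lia. rewrite Nat.sub_diag. auto.
Qed.

Lemma restr_len x n : length (restr x n) = n.
Proof. unfold restr. rewrite length_map, length_seq. auto. Qed.

Lemma restr_nth x n i : (i < n)%nat -> nth i (restr x n) false = x i.
Proof.
  intro H. unfold restr. rewrite nth_indep with (d' := x 0%nat) by (rewrite length_map, length_seq; auto).
  rewrite map_nth, seq_nth by auto. reflexivity.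
Qed.

Lemma N_restr x n : Nbasic (restr x n) x.
Proof. intros i Hi. rewrite restr_len in Hi. rewrite restr_nth; auto. Qed.

Fixpoint sumw (L : list (list bool)) : R :=
  match L with [] => 0 | t :: L' => (/2) ^ length t + sumw L' end.

Lemma sumw_ge0 L : 0 <= sumw L.
Proof. induction L; simpl. lra. assert (0 < (/2)^length a) by (apply pow_lt; lra). lra. Qed.

Lemma sumw_app L1 L2 : sumw (L1 ++ L2) = sumw L1 + sumw L2.
Proof. induction L1; simpl; lra. Qed.

Lemma sumw_filter2 (p q : list bool -> bool) L :
  (forall t, p t = true -> q t = false) ->
  sumw (filter p L) + sumw (filter q L) <= sumw L.
Proof.
  intro H. induction L as [|t L IH]; simpl. lra.
  assert (0 < (/2)^length t) by (apply pow_lt; lra).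
  destruct (p t) eqn:E1.
  - rewrite (H _ E1). simpl. lra.
  - destruct (q t); simpl; lra.
Qed.

Lemma sumw_in t L : In t L -> (/2)^length t <= sumw L.
Proof.
  induction L as [|u L IH]; simpl. tauto.
  intros [->|H]. pose proof (sumw_ge0 L); lra.
  assert (0 < (/2)^length u) by (apply pow_lt; lra). specialize (IH H); lra.
Qed.

Lemma pow_half_le m n : (m <= n)%nat -> (/2)^n <= (/2)^m.
Proof.
  induction 1. lra. eapply Rle_trans; [|exact IHle]. simpl.
  assert (0 <= (/2)^m0) by (apply pow_le; lra). lra.
Qed.

Definition decb (P : Prop) : bool := if excluded_middle_informative P then true else false.
Lemma decb_true P : decb P = true <-> P.
Proof. unfold decb. destruct (excluded_middle_informative P); split; intros; auto; discriminate. Qed.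

Lemma finite_lemma : forall n L s,
  (forall t, In t L -> (length t <= length s + n)%nat) ->
  (forall y, Nbasic s y -> exists t, In t L /\ Nbasic t y) ->
  (/2)^length s <= sumw L.
Proof.
  induction n as [|n IH]; intros L s Hlen Hcov.
  - destruct (Hcov (pt s) (N_pt s)) as [t [Ht Hty]].
    eapply Rle_trans; [|apply (sumw_in _ _ Ht)]. apply pow_half_le.
    specialize (Hlen _ Ht). lia.
  - destruct (classic (exists t, In t L /\ pre t s)) as [[t [Ht [Hl _]]]|Hno].
    { eapply Rle_trans; [|apply (sumw_in _ _ Ht)]. apply pow_half_le. auto. }
    assert (Hhalf : forall b, (/2)^length (s ++ [b]) <= sumw (filter (fun t => decb (pre (s++[b]) t)) L)).
    { intro b. apply IH.
      - intros t Ht. apply filter_In in Ht as [Ht Hp]. apply decb_true in Hp as [Hp _].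
        rewrite length_app in *; simpl in *. specialize (Hlen _ Ht). lia.
      - intros y Hy. destruct (N_app _ _ _ Hy) as [Hys Hb].
        destruct (Hcov y Hys) as [t [Ht Hty]]. exists t. split; auto.
        apply filter_In. split; auto. apply decb_true.
        destruct (Nat.le_gt_cases (length t) (length s)).
        + exfalso. apply Hno. exists t. split; auto. eapply NN_pre; eauto.
        + eapply NN_pre; eauto. rewrite length_app; simpl; lia. }
    pose proof (Hhalf false) as H0. pose proof (Hhalf true) as H1.
    rewrite length_app in H0, H1. simpl in H0, H1.
    assert (Hd := sumw_filter2 (fun t => decb (pre (s++[false]) t)) (fun t => decb (pre (s++[true]) t)) L).
    assert ((/2)^(length s + 1) * 2 = (/2)^length s) by (rewrite pow_add; simpl; field).
    cut (sumw (filter (fun t => decb (pre (s++[false]) t)) L) + sumw (filter (fun t => decb (pre (s++[true]) t)) L) <= sumw L). lra.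
    apply Hd. intros t Ht. apply decb_true in Ht as [_ Ht].
    destruct (decb (pre (s ++ [true]) t)) eqn:E; auto.
    apply decb_true in E as [_ E].
    assert (Hlt : (length s < length (s ++ [false]))%nat) by (rewrite length_app; simpl; lia).
    specialize (Ht _ Hlt). assert (Hlt' : (length s < length (s ++ [true]))%nat) by (rewrite length_app; simpl; lia).
    specialize (E _ Hlt'). rewrite !app_nth2, Nat.sub_diag in Ht, E by lia. simpl in Ht, E. congruence.
Qed.
Lemma mu_ge (A : cset) (m : R) : (forall l, cover_bound A l -> m <= l) -> m <= mu A.
Proof.
  intro H. unfold mu.
  destruct (completeness _ _ _) as [s [Hub Hl]]. simpl.
  assert (s <= - m).
  { apply Hl. intros y Hy. specialize (H _ Hy). lra. }
  lra.
Qed.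

Lemma mu_le (A : cset) (l : R) : cover_bound A l -> mu A <= l.
Proof.
  intro H. unfold mu.
  destruct (completeness _ _ _) as [s [Hub Hl]]. simpl.
  assert (- l <= s).
  { apply Hub. unfold neg_cover_bound. rewrite Ropp_involutive. exact H. }
  lra.
Qed.

Lemma mu_mono (A B : cset) : (forall x, A x -> B x) -> mu A <= mu B.
Proof.
  intro H. unfold mu at 2.
  destruct (completeness _ _ _) as [s [Hub Hl]]. simpl.
  assert (s <= - mu A).
  { apply Hl. intros y [c [Hc Hs]]. assert (mu A <= - y).
    { apply mu_le. exists c; split; auto. intros x Ax. apply Hc, H, Ax. }
    lra. }
  lra.
Qed.

Definition fcov (c : nat -> option (list bool)) (M : nat) (s : list bool) : Prop :=
  forall y, Nbasic s y -> exists k t, (k <= M)%nat /\ c k = Some t /\ Nbasic t y.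

Local Open Scope nat_scope.
Lemma compact (c : nat -> option (list bool)) s :
  (forall y, Nbasic s y -> exists k t, c k = Some t /\ Nbasic t y) ->
  exists M, fcov c M s.
Proof.
  intro Hc. apply NNPP. intro Hbad.
  set (bad := fun t => forall M, ~ fcov c M t).
  assert (Hb0 : bad s) by (intros M HM; apply Hbad; exists M; auto).
  assert (Hsplit : forall t, bad t -> ~ bad (t ++ [false]) -> bad (t ++ [true])).
  { intros t Ht Hf M HM. apply Hf. intros M' HM'.
    apply (Ht (max M M')). intros y Hy.
    destruct (y (length t)) eqn:E.
    - destruct (HM y (app_N _ _ _ Hy E)) as [k [u [Hk H]]]. exists k, u. split; [lia|auto].
    - destruct (HM' y (app_N _ _ _ Hy E)) as [k [u [Hk H]]]. exists k, u. split; [lia|auto]. }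
  set (next := fun t => if excluded_middle_informative (bad (t ++ [false])) then t ++ [false] else t ++ [true]).
  assert (Hnext : forall t, bad t -> bad (next t) /\ pre t (next t) /\ length (next t) = S (length t)).
  { intros t Ht. unfold next. destruct (excluded_middle_informative _).
    - split; auto. split. split. rewrite length_app; simpl; lia. intros; rewrite app_nth1; auto.
      rewrite length_app; simpl; lia.
    - split. eapply Hsplit; eauto. split. split. rewrite length_app; simpl; lia. intros; rewrite app_nth1; auto.
      rewrite length_app; simpl; lia. }
  set (path := fun m => Nat.iter m next s).
  assert (Hp : forall m, bad (path m) /\ length (path m) = (length s + m)%nat).
  { induction m. change (path 0%nat) with s. split. exact Hb0. rewrite Nat.add_0_r; reflexivity.
    destruct IHm as [H1 H2]. destruct (Hnext _ H1) as [A [B C]].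
    change (path (S m)) with (next (path m)). rewrite C, H2. split; auto; lia. }
  assert (Hpre : forall m k, pre (path m) (path (m + k)%nat)).
  { intros m k. induction k. rewrite Nat.add_0_r. split; auto.
    eapply pre_trans; [exact IHk|]. replace (m + S k)%nat with (S (m + k)) by lia.
    change (path (S (m+k))) with (next (path (m+k))). apply Hnext, Hp. }
  set (x := fun i => nth i (path (S i)) false).
  assert (Hx : forall m, Nbasic (path m) x).
  { intros m i Hi. unfold x.
    destruct (Nat.le_gt_cases m (S i)).
    - replace (S i) with (m + (S i - m))%nat by lia. symmetry. apply (proj2 (Hpre m _)); auto.
    - replace m with (S i + (m - S i))%nat by lia. apply (proj2 (Hpre _ _)).
      rewrite (proj2 (Hp _)). lia. }
  destruct (Hc x (Hx 0%nat)) as [k [u [Hk Hu]]].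
  destruct (Hp (length u)) as [Hbu Hlu].
  apply (Hbu k). intros y Hy. exists k, u. split; auto. split; auto.
  eapply pre_N; [|exact Hy]. eapply NN_pre; eauto. lia.
Qed.

Local Open Scope R_scope.
Fixpoint clist (c : nat -> option (list bool)) (M : nat) : list (list bool) :=
  let o := match c M with Some t => [t] | None => [] end in
  match M with O => o | S M' => clist c M' ++ o end.

Lemma clist_sum c M : sumw (clist c M) = sum_f_R0 (fun k => wt (c k)) M.
Proof.
  induction M; simpl.
  - destruct (c 0%nat); simpl; lra.
  - rewrite sumw_app, IHM. destruct (c (S M)); simpl; lra.
Qed.

Lemma clist_in c M k t : (k <= M)%nat -> c k = Some t -> In t (clist c M).
Proof.
  induction M; intros Hk Hc.
  - assert (k = 0%nat) by lia. subst. simpl. rewrite Hc. left; auto.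
  - simpl. apply in_or_app. destruct (Nat.eq_dec k (S M)).
    + subst. right. rewrite Hc. left; auto.
    + left. apply IHM; auto. lia.
Qed.

Fixpoint maxlen (L : list (list bool)) : nat :=
  match L with [] => O | t :: L' => max (length t) (maxlen L') end.
Lemma maxlen_in t L : In t L -> (length t <= maxlen L)%nat.
Proof. induction L; simpl. tauto. intros [->|H]. lia. specialize (IHL H). lia. Qed.

Lemma core s c l : covers (Nbasic s) c -> (forall n, sum_f_R0 (fun k => wt (c k)) n <= l) ->
  (/2)^length s <= l.
Proof.
  intros Hc Hl. destruct (compact c s Hc) as [M HM].
  specialize (Hl M). rewrite <- (clist_sum c M) in Hl. eapply Rle_trans; [|exact Hl].
  apply (finite_lemma (maxlen (clist c M))).
  - intros t Ht. pose proof (maxlen_in _ _ Ht). lia.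
  - intros y Hy. destruct (HM y Hy) as [k [t [Hk [Hct Ht]]]]. exists t. split; auto.
    eapply clist_in; eauto.
Qed.

Lemma mu_N s : (/2)^length s <= mu (Nbasic s).
Proof. apply mu_ge. intros l [c [Hc Hl]]. eapply core; eauto. Qed.

Fixpoint enc (s : list bool) : nat :=
  match s with [] => O | b :: s' => S (if b then 2 * enc s' + 1 else 2 * enc s')%nat end.
Fixpoint decf (f n : nat) : list bool :=
  match f with O => [] | S f' => match n with O => [] | S m => Nat.odd m :: decf f' (Nat.div2 m) end end.
Lemma enc_len s : (length s <= enc s)%nat.
Proof. induction s as [|b s IH]; simpl. lia. destruct b; lia. Qed.
Lemma decf_enc s : forall f, (length s <= f)%nat -> decf f (enc s) = s.
Proof.
  induction s as [|b s IH]; intros f Hf; destruct f; simpl in Hf; try lia.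
  - reflexivity.
  - reflexivity.
  - cbn [decf enc]. destruct b.
  + rewrite Nat.odd_odd, Nat.div2_odd', IH by lia. auto.
  + rewrite Nat.odd_even, Nat.div2_double, IH by lia. auto.
Qed.
Definition e (j : nat) := decf j j.
Lemma e_enc s : e (enc s) = s.
Proof. apply decf_enc, enc_len. Qed.

Definition tt (j : nat) := e j ++ repeat true (j + 2).
Definition U : cset := fun y => exists j, Nbasic (tt j) y.

Lemma len_tt j : length (tt j) = (length (e j) + (j + 2))%nat.
Proof. unfold tt. rewrite length_app, repeat_length. auto. Qed.
Lemma tt_ones j i : (length (e j) <= i < length (tt j))%nat -> nth i (tt j) false = true.
Proof.
  intros [H1 H2]. rewrite len_tt in H2. unfold tt. rewrite app_nth2 by lia.
  apply nth_repeat_lt. lia.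
Qed.
Lemma pre_e_tt j : pre (e j) (tt j).
Proof. split. rewrite len_tt; lia. intros i Hi. unfold tt. rewrite app_nth1; auto. Qed.
Lemma wt_ge0 o : 0 <= wt o.
Proof. destruct o; simpl. apply pow_le; lra. lra. Qed.
Lemma geom M : sum_f_R0 (fun j => (/2)^(j+2)) M = /2 - (/2)^(M+2).
Proof.
  induction M. simpl. field. rewrite tech5, IHM.
  replace (S M + 2)%nat with (S (M + 2)) by lia. simpl. field.
Qed.
Lemma pow_pos_half n : 0 < (/2)^n.
Proof. apply pow_lt; lra. Qed.

Lemma U_open : is_open U.
Proof.
  intros x [j Hj]. exists (length (tt j)). intros y Hy. exists j.
  eapply pre_N; [|exact Hy]. eapply NN_pre; [exact Hj| apply N_restr|]. rewrite restr_len; lia.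
Qed.

Lemma U_dense s : exists y, Nbasic s y /\ U y.
Proof.
  exists (pt (tt (enc s))). split.
  - eapply pre_N; [|apply N_pt]. rewrite <- (e_enc s) at 1. apply pre_e_tt.
  - exists (enc s). apply N_pt.
Qed.

Lemma zeros x : ~ U x -> forall N, exists i, (N <= i)%nat /\ x i = false.
Proof.
  intros Hx N. apply NNPP. intro H. apply Hx. exists (enc (restr x N)).
  intros i Hi. destruct (Nat.lt_ge_cases i N).
  - unfold tt. rewrite app_nth1 by (rewrite e_enc, restr_len; auto).
    rewrite e_enc, restr_nth; auto.
  - rewrite tt_ones by (rewrite e_enc, restr_len; lia).
    destruct (x i) eqn:E; auto. exfalso; apply H; exists i; auto.
Qed.

Lemma dens_fail x n : ~ U x -> (1 <= n)%nat -> x (n - 1)%nat = false ->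
  mu (cinter U (Nbasic (restr x n))) / mu (Nbasic (restr x n)) <= /2.
Proof.
  intros Hx Hn Hz. set (s := restr x n).
  assert (HN : (/2)^n <= mu (Nbasic s)) by (rewrite <- (restr_len x n) at 1; apply mu_N).
  assert (HI : mu (cinter U (Nbasic s)) <= (/2)^n * /2).
  { apply mu_le.
    exists (fun j => if excluded_middle_informative (pre s (e j)) then Some (tt j) else None).
    split.
    - intros y [[j Hj] Hy]. exists j, (tt j).
      destruct (excluded_middle_informative (pre s (e j))) as [Hp|Hp]; [split; auto|exfalso].
      assert (Hey : Nbasic (e j) y) by (eapply pre_N; [apply pre_e_tt|exact Hj]).
      destruct (Nat.le_gt_cases n (length (e j))).
      + apply Hp. eapply NN_pre; eauto. unfold s; rewrite restr_len; auto.
      + destruct (Nat.le_gt_cases (length (tt j)) n).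
        * apply Hx. exists j. eapply pre_N; [|apply (N_restr x n)].
          eapply NN_pre; eauto. rewrite restr_len; auto.
        * assert (E1 := tt_ones j (n - 1) ltac:(lia)).
          rewrite <- Hj in E1 by lia.
          rewrite Hy in E1 by (unfold s; rewrite restr_len; lia).
          unfold s in E1. rewrite restr_nth in E1 by lia. congruence.
    - intro M. eapply Rle_trans.
      + apply (sum_Rle _ (fun j => (/2)^(j+2) * (/2)^n)). intros j _.
        destruct (excluded_middle_informative (pre s (e j))) as [[Hl _]|]; simpl.
        * rewrite <- pow_add. apply pow_half_le. rewrite len_tt. unfold s in Hl.
          rewrite restr_len in Hl. lia.
        * apply Rmult_le_pos; apply pow_le; lra.
      + rewrite <- scal_sum, geom. pose proof (pow_pos_half n). pose proof (pow_pos_half (M+2)).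
        apply Rmult_le_compat_l; lra. }
  pose proof (pow_pos_half n).
  apply Rmult_le_reg_r with (mu (Nbasic s)). lra.
  unfold Rdiv. rewrite Rmult_assoc, Rinv_l by lra. nra.
Qed.
Lemma Phi_U_sub x : Phi U x -> U x.
Proof.
  intro H. apply NNPP. intro Hx. destruct (H (/2)) as [N HN]. lra.
  destruct (zeros x Hx N) as [i [Hi Hxi]].
  specialize (HN (S i) ltac:(lia)).
  assert (Hr := dens_fail x (S i) Hx ltac:(lia) ltac:(replace (S i - 1)%nat with i by lia; auto)).
  unfold R_dist in HN. apply Rabs_def2 in HN. lra.
Qed.
Lemma U_sub_Phi x : U x -> Phi U x.
Proof.
  intros [j Hj] eps He. exists (length (tt j)). intros n Hn.
  assert (Hs : forall y, Nbasic (restr x n) y -> U y).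
  { intros y Hy. exists j. eapply pre_N; [|exact Hy]. eapply NN_pre; [exact Hj|apply N_restr|].
    rewrite restr_len; lia. }
  assert (E : mu (cinter U (Nbasic (restr x n))) = mu (Nbasic (restr x n))).
  { apply Rle_antisym; apply mu_mono. intros y [_ Hy]; auto. intros y Hy; split; auto. }
  rewrite E. assert (Hp := mu_N (restr x n)). pose proof (pow_pos_half (length (restr x n))).
  unfold Rdiv. rewrite Rinv_r by lra. unfold R_dist. rewrite Rminus_diag, Rabs_R0. auto.
Qed.

Fixpoint inter (f g : nat -> option (list bool)) (i : nat) : option (list bool) :=
  match i with O => f O | S i' => inter g (fun k => f (S k)) i' end.

Lemma inter_even k : forall f g, inter f g (2 * k) = f k.
Proof.
  induction k; intros f g. reflexivity.
  replace (2 * S k)%nat with (S (S (2 * k))) by lia. simpl inter at 1.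
  rewrite IHk. reflexivity.
Qed.
Lemma inter_odd k f g : inter f g (2 * k + 1) = g k.
Proof.
  replace (2 * k + 1)%nat with (S (2 * k)) by lia. change (inter f g (S (2*k))) with (inter g (fun k => f (S k)) (2*k)). rewrite inter_even. reflexivity.
Qed.

Lemma sum_inter f g M : sum_f_R0 (fun i => wt (inter f g i)) (2 * M + 1) =
  sum_f_R0 (fun k => wt (f k)) M + sum_f_R0 (fun k => wt (g k)) M.
Proof.
  induction M.
  - simpl. lra.
  - replace (2 * S M + 1)%nat with (S (S (2 * M + 1))) by lia.
    rewrite !tech5, IHM.
    replace (S (S (2 * M + 1))) with (2 * S M + 1)%nat by lia.
    replace (S (2 * M + 1)) with (2 * S M)%nat by lia.
    rewrite inter_odd, inter_even. lra.
Qed.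

Lemma sum_mono (h : nat -> R) M k : (forall i, 0 <= h i) -> sum_f_R0 h M <= sum_f_R0 h (M + k).
Proof.
  intro H. induction k. rewrite Nat.add_0_r; lra.
  replace (M + S k)%nat with (S (M + k)) by lia. rewrite tech5. specialize (H (S (M+k))). lra.
Qed.

Lemma Fr_mu : /2 <= mu (Fr U).
Proof.
  apply mu_ge. intros l [c [Hc Hl]].
  set (d := inter c (fun k => Some (tt k))).
  assert (Hd : covers (Nbasic []) d).
  { intros y _. destruct (classic (U y)) as [[j Hj]|Hu].
    - exists (2 * j + 1)%nat, (tt j). unfold d. rewrite inter_odd. auto.
    - assert (HF : Fr U y).
      { split.
        - intro n. apply U_dense.
        - intros [n Hn]. apply Hu, Hn, N_restr. }
      destruct (Hc y HF) as [k [t [Hk Ht]]]. exists (2 * k)%nat, t. unfold d. rewrite inter_even. auto. }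
  assert (Hb : forall M, sum_f_R0 (fun k => wt (d k)) M <= l + /2).
  { intro M. eapply Rle_trans. apply (sum_mono _ M (M + 1)). intro; apply wt_ge0.
    replace (M + (M + 1))%nat with (2 * M + 1)%nat by lia. unfold d. rewrite sum_inter.
    assert (sum_f_R0 (fun k => wt (Some (tt k))) M <= /2).
    { eapply Rle_trans. apply (sum_Rle _ (fun j => (/2)^(j+2))). intros j _. simpl.
      apply pow_half_le. rewrite len_tt. lia. rewrite geom. pose proof (pow_pos_half (M+2)). lra. }
    specialize (Hl M). lra. }
  pose proof (core [] d (l + /2) Hd Hb). simpl in H. lra.
Qed.

Theorem corollary7p2 :
  exists U : cset,
    is_open U /\ (forall x, Phi U x <-> U x) /\ 0 < mu (Fr U).
Proof.
  exists U. split; [apply U_open|]. split.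
  - intro x; split; [apply Phi_U_sub|apply U_sub_Phi].
  - pose proof Fr_mu. lra.
Qed.
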